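(* Let $A$ be a real matrix with $m$ rows, and let $S, T$ be finite sets of unit vectors in $\mathbb{R}^m$ with $S$ nonempty, $f_A(S) \ge f_A(T)$ and $f_A(S) > 0$. Then there exists $v \in S$ such that $$f_A(T \cup \{v\}) - f_A(T) \ge \sigma_{\min}(S)\, \frac{\big(f_A(S) - f_A(T)\big)^2}{4|S|\, f_A(S)}.$$
   Context: For a finite set $V$ of vectors in $\mathbb{R}^m$, $\Pi_V$ denotes the orthogonal projector onto $\mathrm{span}(V)$, and for a matrix $M$ with $m$ rows, $f_M(V) = \|\Pi_V M\|_F^2$. For a finite set $V$ of unit vectors, $\sigma_{\min}(V)$ is the smallest squared singular value of the matrix with columns $V$, i.e. $\inf_{\|x\|_2 = 1} \|Mx\|_2^2$ for that matrix $M$. *)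

(* Defs.v *)
From HB Require Import structures.
From mathcomp Require Import all_boot all_order all_algebra.
From mathcomp Require Import finmap.
From mathcomp Require Import boolp classical_sets reals.
Set Implicit Arguments. Unset Strict Implicit. Unset Printing Implicit Defensive.
Import Order.TTheory GRing.Theory Num.Theory.
Local Open Scope ring_scope.
Local Open Scope fset_scope.

Section Defs.
Variable R : realType.

Definition sqnorm (k : nat) (x : 'cV[R]_k) : R := \sum_(i < k) x i 0 ^+ 2.

Definition frob2 (p q : nat) (M : 'M[R]_(p, q)) : R :=
  \sum_(i < p) \sum_(j < q) M i j ^+ 2.

Definition rows_of (m : nat) (V : {fset 'cV[R]_m}) : 'M[R]_(size (V : seq _), m) :=
  \matrix_(i < size (V : seq _)) (nth 0 (V : seq _) i)^T.

Definition cols_of (m : nat) (V : {fset 'cV[R]_m}) : 'M[R]_(m, size (V : seq _)) :=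
  (rows_of V)^T.

(* Orthogonal projector onto span(V): with B a basis (row-free matrix) of the
   row space of rows_of V, i.e. of span(V), Pi_V = B^T (B B^T)^{-1} B. *)
Definition proj (m : nat) (V : {fset 'cV[R]_m}) : 'M[R]_m :=
  let B := row_base (rows_of V) in B^T *m invmx (B *m B^T) *m B.

Definition fM (m n : nat) (M : 'M[R]_(m, n)) (V : {fset 'cV[R]_m}) : R :=
  frob2 (proj V *m M).

(* smallest squared singular value of the matrix with columns V *)
Definition sigma_min (m : nat) (V : {fset 'cV[R]_m}) : R :=
  inf [set sqnorm (cols_of V *m x) | x in [set x : 'cV[R]_(size (V : seq _)) | sqnorm x = 1]].

End Defs.

(* Main.v *)
Require Import Defs.
From HB Require Import structures.
From mathcomp Require Import all_boot all_order all_algebra.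
From mathcomp Require Import finmap.
From mathcomp Require Import boolp classical_sets reals.
From mathcomp Require Import ring lra.
Set Implicit Arguments. Unset Strict Implicit. Unset Printing Implicit Defensive.
Import Order.TTheory GRing.Theory Num.Theory.
Local Open Scope ring_scope.


Section Aux.
Variable R : realType.

Definition ip (p q : nat) (X Y : 'M[R]_(p, q)) : R := \tr (X^T *m Y).

Lemma frob2E p q (X : 'M[R]_(p, q)) : frob2 X = ip X X.
Proof.
rewrite /frob2 /ip /mxtrace exchange_big /=; apply: eq_bigr => j _.
rewrite mxE; apply: eq_bigr => i _; by rewrite mxE expr2.
Qed.

Lemma ipC p q (X Y : 'M[R]_(p, q)) : ip X Y = ip Y X.
Proof. by rewrite /ip -mxtrace_tr trmx_mul trmxK. Qed.

Lemma ip_mull p q r (M : 'M[R]_(p, r)) (X : 'M[R]_(r, q)) Y :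
  ip (M *m X) Y = ip X (M^T *m Y).
Proof. by rewrite /ip trmx_mul mulmxA. Qed.

Lemma ipDl p q (X Y Z : 'M[R]_(p, q)) : ip (X + Y) Z = ip X Z + ip Y Z.
Proof. by rewrite /ip linearD /= mulmxDl mxtraceD. Qed.

Lemma ipDr p q (X Y Z : 'M[R]_(p, q)) : ip Z (X + Y) = ip Z X + ip Z Y.
Proof. by rewrite /ip mulmxDr mxtraceD. Qed.

Lemma ipNl p q (X Z : 'M[R]_(p, q)) : ip (- X) Z = - ip X Z.
Proof. by rewrite /ip linearN /= mulNmx raddfN. Qed.

Lemma ipNr p q (X Z : 'M[R]_(p, q)) : ip Z (- X) = - ip Z X.
Proof. by rewrite /ip mulmxN raddfN. Qed.

Lemma ipZl p q a (X Z : 'M[R]_(p, q)) : ip (a *: X) Z = a * ip X Z.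
Proof. by rewrite /ip linearZ /= -scalemxAl mxtraceZ. Qed.

Lemma ipZr p q a (X Z : 'M[R]_(p, q)) : ip Z (a *: X) = a * ip Z X.
Proof. by rewrite /ip -scalemxAr mxtraceZ. Qed.

Lemma frob2_ge0 p q (X : 'M[R]_(p, q)) : 0 <= frob2 X.
Proof. by apply: sumr_ge0 => i _; apply: sumr_ge0 => j _; apply: sqr_ge0. Qed.

Lemma ip_ge0 p q (X : 'M[R]_(p, q)) : 0 <= ip X X.
Proof. by rewrite -frob2E frob2_ge0. Qed.

Lemma ip_eq0 p q (X : 'M[R]_(p, q)) : ip X X = 0 -> X = 0.
Proof.
rewrite -frob2E /frob2 => /eqP; rewrite psumr_eq0; last first.
  by move=> i _; apply: sumr_ge0 => j _; apply: sqr_ge0.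
move/allP => H; apply/matrixP => i j; rewrite mxE.
have /H : i \in index_enum 'I_p by rewrite mem_index_enum.
rewrite /= psumr_eq0; last by move=> k _; apply: sqr_ge0.
move/allP => H2; have /H2 : j \in index_enum 'I_q by rewrite mem_index_enum.
by rewrite /= sqrf_eq0 => /eqP.
Qed.

Lemma ip_CS p q (X Y : 'M[R]_(p, q)) : ip X Y ^+ 2 <= ip X X * ip Y Y.
Proof.
have [Y0|] := eqVneq Y 0.
  by rewrite Y0 /ip trmx0 mul0mx mulmx0 mxtrace0 expr0n /= mulr0.
move=> Yn0.
have bpos : 0 < ip Y Y.
  by rewrite lt_neqAle ip_ge0 andbT eq_sym; apply/eqP => /ip_eq0 /eqP; rewrite (negPf Yn0).
have H := ip_ge0 (ip Y Y *: X - ip X Y *: Y).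
rewrite ipDl !ipDr !ipNl !ipNr !ipZl !ipZr (ipC Y X) in H.
have : 0 <= ip Y Y * (ip Y Y * ip X X - ip X Y ^+ 2) by nra.
by rewrite pmulr_rge0 // subr_ge0 mulrC.
Qed.


Section Proj.
Variable m : nat.
Implicit Types V : {fset 'cV[R]_m}.

Lemma BBt_unit (k : nat) (B : 'M[R]_(k, m)) : row_free B -> B *m B^T \in unitmx.
Proof.
move=> fB; rewrite -row_free_unit -kermx_eq0; apply/eqP.
set K := kermx _.
have HK : K *m (B *m B^T) = 0 by rewrite mulmx_ker.
have : ip (K *m B)^T (K *m B)^T = 0.
  by rewrite /ip trmxK trmx_mul mulmxA -(mulmxA K) HK mul0mx mxtrace0.
move/ip_eq0 => /eqP; rewrite trmx_eq0 => /eqP KB0.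
by apply: (row_free_inj fB); rewrite KB0 mul0mx.
Qed.

Let B V := row_base (rows_of V).
Let M V := invmx (B V *m (B V)^T).

Lemma M_unit V : B V *m (B V)^T \in unitmx.
Proof. exact/BBt_unit/row_base_free. Qed.

Lemma projE V : proj V = (B V)^T *m M V *m B V.
Proof. by []. Qed.

Lemma sym_gen k (b : 'M[R]_(k, m)) : (b^T *m invmx (b *m b^T) *m b)^T = b^T *m invmx (b *m b^T) *m b.
Proof. by rewrite !trmx_mul trmxK trmx_inv trmx_mul trmxK mulmxA. Qed.

Lemma proj_sym V : (proj V)^T = proj V.
Proof. by rewrite projE sym_gen. Qed.

Lemma projBt V : proj V *m (B V)^T = (B V)^T.
Proof.
rewrite projE /M; have := M_unit V; move: (B V) => b hb.
by rewrite -!mulmxA mulVmx // mulmx1. Qed.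

Lemma proj_fix_mx V p (Y : 'M[R]_(p, m)) : (Y <= rows_of V)%MS -> Y *m proj V = Y.
Proof.
move=> sY; have : (Y <= B V)%MS by rewrite (submx_trans sY) // eq_row_base.
case/submxP => Z ->; rewrite -mulmxA; congr (_ *m _).
rewrite projE /M; have := M_unit V; move: (B V) => b hb.
by rewrite !mulmxA mulmxV // mul1mx.
Qed.

Lemma proj_sub V : (proj V <= rows_of V)%MS.
Proof. by rewrite projE (submx_trans (submxMl _ _)) // eq_row_base. Qed.

Lemma proj_idem V : proj V *m proj V = proj V.
Proof. exact/proj_fix_mx/proj_sub. Qed.

Lemma mem_rows V v : v \in V -> (v^T <= rows_of V)%MS.
Proof.
move=> vV; have vs : (index v V < size (V : seq _))%N by rewrite index_mem.
have -> : v^T = row (Ordinal vs) (rows_of V) by rewrite /rows_of rowK /= nth_index.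
exact: row_sub.
Qed.

Lemma rows_sub V W : {subset V <= W} -> (rows_of V <= rows_of W)%MS.
Proof.
move=> sVW; apply/row_subP => i; rewrite /rows_of rowK.
by apply/mem_rows/sVW/mem_nth.
Qed.

Lemma proj_mulE V W : {subset V <= W} ->
  proj V *m proj W = proj V /\ proj W *m proj V = proj V.
Proof.
move=> sVW; have h : proj V *m proj W = proj V.
  exact/proj_fix_mx/(submx_trans (proj_sub V))/rows_sub.
split=> //; by rewrite -(proj_sym V) -(proj_sym W) -trmx_mul h.
Qed.

Lemma proj_fix_vec V v : v \in V -> proj V *m v = v.
Proof.
move=> vV; apply: trmx_inj; rewrite trmx_mul proj_sym.
exact/proj_fix_mx/mem_rows.
Qed.

End Proj.

Lemma frob2_cols p q (X : 'M[R]_(p, q)) : frob2 X = \sum_j sqnorm (col j X).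
Proof.
rewrite /frob2 /sqnorm exchange_big /=; apply: eq_bigr => j _.
by apply: eq_bigr => i _; rewrite mxE.
Qed.

Lemma sqnormE k (x : 'cV[R]_k) : sqnorm x = ip x x.
Proof. by rewrite -frob2E /frob2 /sqnorm; apply: eq_bigr => i _; rewrite big_ord1. Qed.

Lemma ip_vec k (w x : 'cV[R]_k) : ip w x = (w^T *m x) 0 0.
Proof. by rewrite /ip /mxtrace big_ord1. Qed.

Lemma frob2_submul p q (w : 'cV[R]_p) (X : 'M[R]_(p, q)) :
  frob2 (w^T *m X) <= ip w w * frob2 X.
Proof.
rewrite !frob2_cols mulr_sumr; apply: ler_sum => j _.
have -> : sqnorm (col j (w^T *m X)) = ip w (col j X) ^+ 2.
  rewrite /sqnorm big_ord1 !mxE ip_vec !mxE; congr (_ ^+ 2).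
  by apply: eq_bigr => i _; rewrite !mxE.
by rewrite sqnormE ip_CS.
Qed.

Lemma sigma_le m (V : {fset 'cV[R]_m}) (x : 'cV[R]_(size (V : seq _))) :
  sqnorm x = 1 -> sigma_min V <= sqnorm (cols_of V *m x).
Proof.
move=> hx; apply: ge_inf; last by exists x.
exists 0 => y [z _ <-]; rewrite sqnormE; exact: ip_ge0.
Qed.

Lemma sigma_vec m (V : {fset 'cV[R]_m}) (x : 'cV[R]_(size (V : seq _))) :
  sigma_min V * sqnorm x <= sqnorm (cols_of V *m x).
Proof.
have [s0|] := eqVneq (sqnorm x) 0.
  by rewrite s0 mulr0 sqnormE ip_ge0.
move=> sn0; have spos : 0 < sqnorm x by rewrite lt_neqAle eq_sym sn0 sqnormE ip_ge0.
set c := (Num.sqrt (sqnorm x))^-1.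
have c2 : c * c = (sqnorm x)^-1.
  by rewrite /c -invfM -expr2 sqr_sqrtr // ltW.
have h := sigma_le (x := c *: x).
rewrite -scalemxAr !sqnormE !ipZl !ipZr -!sqnormE !mulrA c2 mulVf // in h.
have := h erefl; move=> h2.
have ip0 : 0 < (sqnorm x)^-1 by rewrite invr_gt0.
rewrite -(ler_pM2r ip0) -mulrA mulfV ?mulr1 //; first by rewrite mulrC.
Qed.

Lemma col_mul' p r q (A : 'M[R]_(p, r)) (B : 'M[R]_(r, q)) j :
  col j (A *m B) = A *m col j B.
Proof. by apply/matrixP => i k; rewrite !mxE; apply: eq_bigr => l _; rewrite !mxE. Qed.

Lemma sigma_mx m (V : {fset 'cV[R]_m}) q (X : 'M[R]_(size (V : seq _), q)) :
  sigma_min V * frob2 X <= frob2 (cols_of V *m X).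
Proof.
rewrite !frob2_cols mulr_sumr; apply: ler_sum => j _.
by rewrite col_mul' sigma_vec.
Qed.

Lemma sigma_proj m (S : {fset 'cV[R]_m}) q (Y : 'M[R]_(m, q)) :
  sigma_min S * frob2 (proj S *m Y) <= frob2 (rows_of S *m Y).
Proof.
set Z := proj S *m Y.
have : ((Z^T) <= rows_of S)%MS.
  by rewrite /Z trmx_mul proj_sym (submx_trans (submxMl _ _)) // proj_sub.
case/submxP => X0 hX.
have hZ : Z = cols_of S *m X0^T by rewrite /cols_of -trmx_mul -hX trmxK.
have e : frob2 Z = ip X0^T (rows_of S *m Y).
  rewrite frob2E {1}hZ ip_mull /Z /cols_of trmxK mulmxA proj_fix_mx //.
have cs := ip_CS X0^T (rows_of S *m Y).
rewrite -e -!frob2E in cs.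
have sg := sigma_mx X0^T; rewrite -hZ in sg.
have fZ := frob2_ge0 Z; have fX := frob2_ge0 X0^T; have fG := frob2_ge0 (rows_of S *m Y).
set a := sigma_min S in sg *; set z := frob2 Z in e cs sg fZ *.
set x := frob2 X0^T in cs sg fX *; set g := frob2 _ in cs fG *.
have [a0|apos] := lerP a 0.
  by apply: le_trans fG; rewrite mulr_le0_ge0.
have [z0|zpos] := eqVneq z 0; first by rewrite z0 mulr0.
have zp : 0 < z by rewrite lt_neqAle eq_sym zpos.
have : a * z * z <= g * z by nra.
by rewrite ler_pM2r.
Qed.

Lemma fM_ip m q (A : 'M[R]_(m, q)) V : fM A V = ip A (proj V *m A).
Proof. by rewrite /fM frob2E ip_mull proj_sym mulmxA proj_idem. Qed.

Lemma gain_ge m q (A : 'M[R]_(m, q)) (T : {fset 'cV[R]_m}) v : sqnorm v = 1 ->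
  frob2 (v^T *m (1%:M - proj T) *m A) <= fM A (T `|` [fset v])%fset - fM A T.
Proof.
move=> v1.
set W := (T `|` [fset v])%fset.
have sub : {subset T <= W} by move=> x xT; rewrite /W in_fsetU xT.
have vW : v \in W by rewrite /W in_fsetU in_fset1 eqxx orbT.
have [h1 h2] := proj_mulE sub.
set PT := proj T in h1 h2 *; set PW := proj W in h1 h2 *.
have sT : PT^T = PT by apply: proj_sym.
have sW : PW^T = PW by apply: proj_sym.
have iT : PT *m PT = PT by apply: proj_idem.
have iW : PW *m PW = PW by apply: proj_idem.
have fv : PW *m v = v by apply: proj_fix_vec.
set D := PW - PT.
have sD : D^T = D by rewrite /D linearB /= sT sW.
have iD : D *m D = D.
  by rewrite /D mulmxBl !mulmxBr iW iT h1 h2 subrr subr0.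
have gain : fM A W - fM A T = ip (D *m A) (D *m A).
  rewrite !fM_ip ip_mull sD mulmxA iD /D mulmxBl ipDr ipNr //.
set Q := 1%:M - PT.
have sQ : Q^T = Q by rewrite /Q linearB /= sT trmx1.
have iQ : Q *m Q = Q.
  by rewrite /Q mulmxBl !mulmxBr !mul1mx !mulmx1 iT subrr subr0.
set w := Q *m v.
have Dw : D *m w = w.
  rewrite /w /D /Q !mulmxBl !mul1mx !mulmxBr (mulmxA PW PT v) h2 (mulmxA PT PT v) iT fv.
  by rewrite subrr subr0.
have wt : v^T *m Q = w^T *m D.
  by rewrite -sD -trmx_mul Dw /w trmx_mul sQ.
have ww : ip w w <= 1.
  have -> : ip w w = 1 - ip (PT *m v) (PT *m v).
    rewrite /w ip_mull sQ mulmxA iQ /Q mulmxBl mul1mx ipDr ipNr -sqnormE v1.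
    by rewrite ip_mull sT mulmxA iT.
  by rewrite lerBlDr lerDl ip_ge0.
rewrite wt -mulmxA gain.
apply: le_trans (frob2_submul _ _) _.
rewrite frob2E; apply: ler_piMl => //; exact: ip_ge0.
Qed.

Lemma scal (fS fT N a b : R) : 0 < fS -> 0 <= fT -> fT <= fS -> 0 <= N ->
  a + b = fS -> a ^+ 2 <= fS * fT -> b ^+ 2 <= fS * N -> (fS - fT) ^+ 2 <= 4 * fS * N.
Proof.
move=> hS hT hTS hN hab ha hb.
have s2 := sqr_sqrtr (ltW hS); have t2 := sqr_sqrtr hT.
have s0 := sqrtr_ge0 fS; have t0 := sqrtr_ge0 fT.
set s := Num.sqrt fS in s2 s0 *; set t := Num.sqrt fT in t2 t0 *.
rewrite -s2 -t2 in hS hTS ha hb hab *.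
have ts : t <= s by rewrite -(ler_pXn2r (n:=2)) ?nnegrE.
have sp : 0 < s by rewrite lt_neqAle s0 andbT; apply/eqP=> e; move: hS; rewrite -e expr0n ltxx.
have aa : a <= s * t.
  have : a ^+ 2 <= (s * t) ^+ 2 by rewrite exprMn.
  by move=> h; apply: le_trans (ler_norm a) _; rewrite -(ler_pXn2r (n:=2)) ?nnegrE ?mulr_ge0 // real_normK ?num_real.
have bb : s * (s - t) <= b by nra.
have bs : (s * (s - t)) ^+ 2 <= b ^+ 2.
  by rewrite ler_pXn2r ?nnegrE ?mulr_ge0 ?subr_ge0 //; apply: le_trans bb; rewrite mulr_ge0 ?subr_ge0.
have NN : (s - t) ^+ 2 <= N.
  have : s ^+ 2 * (s - t) ^+ 2 <= s ^+ 2 * N by rewrite -exprMn; apply: le_trans bs hb.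
  by rewrite ler_pM2l // exprn_gt0.
have e : (s ^+ 2 - t ^+ 2) ^+ 2 = (s - t) ^+ 2 * (s + t) ^+ 2 by ring.
rewrite e; apply: (@le_trans _ _ ((s - t) ^+ 2 * (4 * s ^+ 2))).
  apply: (ler_wpM2l (sqr_ge0 _)).
  have : (s + t) ^+ 2 <= (2 * s) ^+ 2.
    by rewrite ler_pXn2r ?nnegrE ?addr_ge0 ?mulr_ge0 //; lra.
  by rewrite exprMn -[2 ^+ 2]/(2 * 2) => h; apply: le_trans h _; lra.
rewrite mulrC; apply: ler_wpM2l => //; by rewrite mulr_ge0 // sqr_ge0.
Qed.

Lemma frob2_rows p q (X : 'M[R]_(p, q)) : frob2 X = \sum_i frob2 (row i X).
Proof.
rewrite /frob2; apply: eq_bigr => i _; rewrite big_ord1.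
by apply: eq_bigr => j _; rewrite mxE.
Qed.

End Aux.

Local Open Scope fset_scope.

Theorem lemma1 (R : realType) (m n : nat) (A : 'M[R]_(m, n))
  (S T : {fset 'cV[R]_m}) :
  (forall v, v \in S -> sqnorm v = 1) ->
  (forall v, v \in T -> sqnorm v = 1) ->
  S != fset0 ->
  fM A T <= fM A S ->
  0 < fM A S ->
  exists2 v, v \in S &
    sigma_min S * (fM A S - fM A T) ^+ 2 / (4 * (#|` S|)%:R * fM A S)
      <= fM A (T `|` [fset v]) - fM A T.
Proof.
move=> uS _ /fset0Pn [v0 v0S] hTS hS.
set k := #|` S|.
have gain0 : forall v, v \in S -> 0 <= fM A (T `|` [fset v]) - fM A T.
  move=> v vS; apply: le_trans (gain_ge A T (uS v vS)); exact: frob2_ge0.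
have kpos : (0 < k)%N.
  by apply: (leq_ltn_trans (leq0n (index v0 S))); rewrite index_mem.
have kR : 0 < (k%:R : R) by rewrite ltr0n.
have [s0|spos] := lerP (sigma_min S) 0.
  exists v0 => //; apply: le_trans (gain0 v0 v0S).
  rewrite mulr_le0_ge0 ?invr_ge0 //.
    by rewrite mulr_le0_ge0 // sqr_ge0.
  by rewrite !mulr_ge0 ?ler0n ?ltW.
set PS := proj S; set PT := proj T; set Q := 1%:M - PT.
set N := frob2 (PS *m (Q *m A)).
have hN : (fM A S - fM A T) ^+ 2 <= 4 * fM A S * N.
  have eS : fM A S = ip (PS *m A) (PS *m A) by rewrite /fM frob2E.
  have eT : fM A T = ip (PT *m A) (PT *m A) by rewrite /fM frob2E.
  apply: (@scal _ _ _ _ (ip (PS *m A) (PT *m A)) (ip (PS *m A) (Q *m A))) => //.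
  - by rewrite /fM frob2_ge0.
  - by rewrite /N frob2_ge0.
  - rewrite -ipDr /Q mulmxBl mul1mx addrC subrK ipC eS ip_mull proj_sym.
    by rewrite (mulmxA PS PS A) proj_idem.
  - by rewrite eS eT ip_CS.
  - have -> : ip (PS *m A) (Q *m A) = ip (PS *m A) (PS *m (Q *m A)).
      by rewrite !ip_mull proj_sym (mulmxA PS PS) proj_idem.
    by rewrite eS /N frob2E ip_CS.
have sig := sigma_proj S (Q *m A).
rewrite [frob2 (rows_of _ *m _)]frob2_rows in sig.
set g := fun i : 'I_k => fM A (T `|` [fset nth 0 S i]) - fM A T.
have gi : forall i : 'I_k, frob2 (row i (rows_of S *m (Q *m A))) <= g i.
  move=> i; rewrite row_mul /rows_of rowK mulmxA /g.
  by apply: gain_ge; apply: uS; apply: mem_nth.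
have [[i hi]|nex] := pselect (exists i : 'I_k, sigma_min S * N / k%:R <= g i).
  exists (nth 0 S i); first exact: mem_nth.
  apply: le_trans hi; rewrite -/k.
  have e : sigma_min S * (fM A S - fM A T) ^+ 2 / (4 * k%:R * fM A S) =
    sigma_min S * ((fM A S - fM A T) ^+ 2 / (4 * fM A S)) / k%:R.
    by field; rewrite !gt_eqF.
  rewrite e ler_pM2r ?invr_gt0 // ler_pM2l // ler_pdivrMr ?mulr_gt0 //.
  by rewrite mulrC.
exfalso.
have lt : forall i : 'I_k, g i < sigma_min S * N / k%:R.
  by move=> i; rewrite ltNge; apply/negP => h; apply: nex; exists i.
have : \sum_(i < k) g i < \sum_(i < k) (sigma_min S * N / k%:R).
  apply: ltr_sum => //; apply/hasP; exists (Ordinal kpos) => //.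
rewrite sumr_const card_ord -[_ *+ k]mulr_natr mulfVK ?gt_eqF //.
apply/negP; rewrite -leNgt.
have gs : \sum_(i < k) frob2 (row i (rows_of S *m (Q *m A))) <= \sum_(i < k) g i.
  by apply: ler_sum => i _; apply: gi.
apply: le_trans gs.
exact: sig.
Qed.
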